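(* Let $d$ be an integer and let $b=(b_1,\ldots,b_n)$, $\alpha=(\alpha_1,\ldots,\alpha_n)$, $\beta=(\beta_1,\ldots,\beta_n)$ be vectors of nonnegative integers with $\alpha_1\le\cdots\le\alpha_n=d$, $\beta_1\le\cdots\le\beta_n=d$, $\alpha_i\le\beta_i$ for all $i$, $\alpha_1=0$ and $\beta_1=b_1$. Then the system $$0\le u_i\le b_i\ (i=1,\ldots,n),\qquad \alpha_i\le u_1+\cdots+u_i\le\beta_i\ (i=1,\ldots,n)$$ has an integral solution $u=(u_1,\ldots,u_n)$ if and only if $\beta_i+b_{i+1}+\cdots+b_j\ge\alpha_j$ for every pair $i,j$ with $1\le i\le j\le n$. *)

(* Defs.v *)
From mathcomp Require Import all_boot.
Set Implicit Arguments. Unset Strict Implicit. Unset Printing Implicit Defensive.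
(* Vectors of length n are encoded as functions nat -> nat, read at indices 1..n. *)

(* Main.v *)
Require Import Defs.
From mathcomp Require Import all_boot.
From mathcomp Require Import zify.

Fixpoint Sg (b beta : nat -> nat) (j : nat) : nat :=
  match j with
  | 0 => 0
  | j'.+1 => minn (beta j'.+1) (Sg b beta j' + b j'.+1)
  end.

Theorem lemma3p1 (n d : nat) (b alpha beta : nat -> nat)
  (hn : 0 < n)
  (halpha_mono : forall i, 1 <= i -> i < n -> alpha i <= alpha i.+1)
  (hbeta_mono : forall i, 1 <= i -> i < n -> beta i <= beta i.+1)
  (halpha_n : alpha n = d) (hbeta_n : beta n = d)
  (hab : forall i, 1 <= i <= n -> alpha i <= beta i)
  (halpha1 : alpha 1 = 0) (hbeta1 : beta 1 = b 1) :
  (exists u : nat -> nat,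
      (forall i, 1 <= i <= n -> u i <= b i) /\
      (forall i, 1 <= i <= n ->
         alpha i <= \sum_(1 <= k < i.+1) u k <= beta i))
  <->
  (forall i j, 1 <= i -> i <= j -> j <= n ->
      alpha j <= beta i + \sum_(i.+1 <= k < j.+1) b k).
Proof.
split.
- move=> [u [hu hs]] i j h1i hij hjn.
  have hi0 : 1 <= i <= n by apply/andP; split => //; lia.
  have hj0 : 1 <= j <= n by apply/andP; split => //; lia.
  have /andP[_ hi] := hs i hi0.
  have /andP[hj' _] := hs j hj0.
  apply: (leq_trans hj').
  rewrite (@big_cat_nat _ _ _ i.+1) //=.
  apply: leq_add => //.
  rewrite big_nat_cond [X in _ <= X]big_nat_cond.
  apply: leq_sum => k /andP[/andP[hk1 hk2] _].
  apply: hu; apply/andP; split; lia.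
- move=> H.
  set S := Sg b beta.
  have S1 : S 1 = b 1 by rewrite /S /= add0n hbeta1 minnn.
  have Sle : forall j, 1 <= j -> S j <= beta j.
    by case=> // j _; rewrite /S /= geq_minl.
  have Smono : forall j, j < n -> S j <= S j.+1.
    move=> j hj; rewrite {2}/S /= leq_min; apply/andP; split; last by rewrite leq_addr.
    case: j hj => [|j] hj; first by [].
    apply: leq_trans (Sle _ _) (hbeta_mono _ _ _) => //.
  exists (fun k => S k - S k.-1); split.
    case=> // k _ /=; rewrite leq_subLR /S /= geq_minr //.
  have tele : forall i, i <= n -> \sum_(1 <= k < i.+1) (S k - S k.-1) = S i.
    elim=> [|i IH] hi; first by rewrite big_geq.
    rewrite big_nat_recr //= IH; last by lia.
    have := Smono i hi; lia.
  have low : forall j, 1 <= j <= n -> exists i, 1 <= i <= j /\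
      S j = beta i + \sum_(i.+1 <= k < j.+1) b k.
    case=> // j; elim: j => [|j IH] hj.
      by exists 1; split => //; rewrite big_geq // S1 hbeta1 addn0.
    have [i [hi1 hi2]] := IH ltac:(lia).
    have -> : S j.+2 = minn (beta j.+2) (S j.+1 + b j.+2) by [].
    case: (leqP (beta j.+2) (S j.+1 + b j.+2)) => hm.
      exists j.+2; split; first lia.
      by rewrite big_geq // addn0.
    exists i; split; first lia.
    have hh : i.+1 <= j.+2 by lia.
    by rewrite hi2 (big_nat_recr _ _ _ hh) /= addnA.
  move=> i hi; rewrite tele; last by lia.
  apply/andP; split; last by apply: Sle; lia.
  have [k [hk1 ->]] := low i hi.
  apply: H; lia.
Qed.
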